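(* Let $\mathbf{p},\mathbf{q},\lambda,\mu,\bar d,\bar w$, $q\in(0,1)$, the random variable $X$ and the quantities $p^{(E)}$ be as in the context. Let $0<x\le\bar d\bar w$ and let $\sigma_x=\big((w_i,x_{i1},\dots,x_{i\ell_i})\big)_{1\le i\le d-1}$ be a configuration starting from $x$ that occurs with positive probability. Let $(y_{ij})_{1\le i\le d-1,\,1\le j\le\ell_i}$ be integers such that $y_{ij}\le x_{ij}$ and $\mathbb{P}(X=y_{ij})>0$ for all $i,j$. Let $\sigma'_x=\big((w_i,y'_{i1},\dots,y'_{i\ell_i})\big)_{1\le i\le d-1}$, where for each $i$, $(y'_{i1}\le\dots\le y'_{i\ell_i})$ is the nondecreasing rearrangement of $(y_{i1},\dots,y_{i\ell_i})$. Then $\sigma'_x$ is a configuration starting from $x$ that occurs with positive probability.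
   Context: Standing assumptions: $\mathbf{p}=(p_d)_{d\ge0}$, $\mathbf{q}=(q_w)_{w\ge0}$ are probability distributions on nonnegative integers with $\lambda=\sum_d dp_d\in(0,\infty)$, $\mu=\sum_w wq_w\in(0,\infty)$, $p_d=0$ for $d>\bar d$, $q_w=0$ for $w>\bar w$ (integers $\bar d,\bar w\ge1$), $p_0=q_0=q_1=0$. $X$ is the random variable with $\mathbb{P}(X=k)=\sum_{d=1}^{\bar d}\frac{dp_d}{\lambda}\sum_{(w_1-1)+\dots+(w_{d-1}-1)=k}\frac{\prod_{j=1}^{d-1}w_jq_{w_j}}{\mu^{d-1}}$ (sum over positive integers $w_j$). $p^{(E)}(\ell,x_1,\dots,x_\ell\mid w)=\mathbb{P}(L=\ell,X_{(1)}=x_1,\dots,X_{(\ell)}=x_\ell)$ for $0\le\ell\le w-1$, $x_1\le\dots\le x_\ell$, where: a clique of size $w$ has an initially active vertex $u$ and initially inactive vertices $1,\dots,w-1$; vertex $i$ has $X_i$ further neighbors outside the clique which are inactive and remain inactive (so its degree is $X_i+w-1$), with $X_1,\dots,X_{w-1}$ i.i.d. copies of $X$; in discrete time an inactive vertex becomes active once its proportion of active neighbors is strictly greater than $q$, active vertices staying active; $L$ is the final number of active vertices among $1,\dots,w-1$, and $X_{(1)}\le\dots\le X_{(w-1)}$ the order statistics of the $X_i$. A configuration starting from $x$ is an element $\sigma_x=\big((w_i,x_{i1},\dots,x_{i\ell_i})\big)_{1\le i\le d-1}$ with $1\le d\le\bar d$, $2\le w_i\le\bar w$, $0\le\ell_i\le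 w_i-1$ and $0\le x_{i1}\le\dots\le x_{i\ell_i}\le\bar d\bar w$. It occurs with positive probability if $p_d>0$, $\sum_{i=1}^{d-1}(w_i-1)=x$, and $q_{w_i}>0$ and $p^{(E)}(\ell_i,x_{i1},\dots,x_{i\ell_i}\mid w_i)>0$ for all $1\le i\le d-1$. *)

(* Defs.v *)
From mathcomp Require Import all_boot all_order all_algebra.
Set Implicit Arguments. Unset Strict Implicit. Unset Printing Implicit Defensive.
Import Order.TTheory GRing.Theory Num.Theory.
Local Open Scope ring_scope.

Section Defs.
Variable R : realFieldType.

(* lambda = sum_d d p_d  (p_d = 0 for d > dbar) *)
Definition lam (p : nat -> R) (dbar : nat) : R :=
  \sum_(d < dbar.+1) (d%:R * p d).
(* mu = sum_w w q_w  (q_w = 0 for w > wbar) *)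
Definition mu (q : nat -> R) (wbar : nat) : R :=
  \sum_(w < wbar.+1) (w%:R * q w).

(* P(X = k).  The inner sum runs over positive integers w_1..w_{d-1}
   with (w_1-1)+...+(w_{d-1}-1) = k; we write w_j = ws j + 1 with
   ws j in {0..k} (which loses no term, since w_j - 1 <= k). *)
Definition PX (p q : nat -> R) (dbar wbar : nat) (k : nat) : R :=
  \sum_(1 <= d < dbar.+1)
    (d%:R * p d / lam p dbar) *
    \sum_(ws : {ffun 'I_d.-1 -> 'I_k.+1} | \sum_(j < d.-1) (ws j : nat) == k)
      ((\prod_(j < d.-1) ((ws j).+1%:R * q (ws j).+1)) / (mu q wbar) ^+ d.-1).

(* One step of the threshold dynamics in a clique of size w:
   vertex u is active (not indexed), vertices 'I_(w-1) are the others;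
   vertex i has degree X i + w - 1; an inactive vertex becomes active when
   (number of active neighbours) / degree > th; the active neighbours of an
   inactive vertex i are u and the vertices of A. *)
Definition clique_step (th : R) (w : nat) (X : 'I_w.-1 -> nat)
  (A : {set 'I_w.-1}) : {set 'I_w.-1} :=
  A :|: [set i | th < (1 + #|A|)%:R / (X i + w.-1)%:R].

(* Final set of active vertices among 1..w-1: the (monotone) process started
   from the empty set, iterated #|'I_(w-1)| times, after which it is stable. *)
Definition clique_final (th : R) (w : nat) (X : 'I_w.-1 -> nat) : {set 'I_w.-1} :=
  fixset (clique_step th X).

(* p^(E)(l, xs | w) = P(L = l, X_(1) = xs_1, ..., X_(l) = xs_l),
   X_1..X_(w-1) i.i.d. with law PX.  X <= (dbar-1)(wbar-1) < dbar*wbar,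
   so summing over values in {0..dbar*wbar} is exact. *)
Definition pE (p q : nat -> R) (dbar wbar : nat) (th : R)
  (l : nat) (xs : seq nat) (w : nat) : R :=
  \sum_(X : {ffun 'I_w.-1 -> 'I_(dbar * wbar).+1})
    (\prod_(i < w.-1) PX p q dbar wbar (X i)) *
    (([&& #|clique_final th (fun i => (X i : nat))| == l &
         take l (sort leq [seq (X i : nat) | i <- enum 'I_w.-1]) == xs])%:R).

(* A configuration ((w_i, x_i1..x_il_i))_{1<=i<=d-1} is a list of length d-1
   of pairs (w_i, [x_i1; ...; x_il_i]). *)
Definition is_config (dbar wbar : nat) (s : seq (nat * seq nat)) : Prop :=
  (1 <= (size s).+1 <= dbar)%N /\
  forall c, c \in s ->
    [/\ (2 <= c.1 <= wbar)%N, (size c.2 <= c.1 - 1)%N,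
        sorted leq c.2 & all (fun y => y <= dbar * wbar)%N c.2].

Definition occurs_pos (p q : nat -> R) (dbar wbar : nat) (th : R)
  (x : nat) (s : seq (nat * seq nat)) : Prop :=
  is_config dbar wbar s /\
  [/\ 0 < p (size s).+1,
      (\sum_(c <- s) (c.1 - 1))%N = x &
      forall c, c \in s -> 0 < q c.1 /\ 0 < pE p q dbar wbar th (size c.2) c.2 c.1].

End Defs.

(* Main.v *)
Require Import Defs.
From mathcomp Require Import all_boot all_order all_algebra.
Import Order.TTheory GRing.Theory Num.Theory.
Local Open Scope ring_scope.

Lemma div_anti (R : realFieldType) (a a' b c : nat) : (a <= a')%N -> (c <= b)%N -> (0 < c)%N ->
  (a%:R / b%:R : R) <= a'%:R / c%:R.
Proof.
move=> ha hb hc.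
apply: (@le_trans _ _ (a'%:R / b%:R)).
  by apply: ler_wpM2r; [rewrite invr_ge0 ler0n | rewrite ler_nat].
apply: ler_wpM2l; first exact: ler0n.
have hb' : (0 < b)%N by apply: leq_trans hb.
by rewrite lef_pV2 ?ler_nat // posrE ltr0n.
Qed.

Section Clique.
Variable R : realFieldType.
Variable th : R.
Variable w : nat.
Implicit Types f g : 'I_w.-1 -> nat.

Lemma step_mono f g (A B : {set 'I_w.-1}) :
  (forall i, (g i <= f i)%N) -> A \subset B ->
  clique_step th f A \subset clique_step th g B.
Proof.
move=> Hgf AB; apply/subsetP => i; rewrite !inE => /orP[/(subsetP AB) ->//|H].
apply/orP; right; apply: (lt_le_trans H).
have hn : (0 < w.-1)%N := leq_ltn_trans (leq0n i) (ltn_ord i).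
apply: div_anti.
- by rewrite ltnS; apply: subset_leq_card.
- by rewrite leq_add2r.
- by rewrite addn_gt0 hn orbT.
Qed.

Lemma step_homo f : {homo clique_step th f : X Y / X \subset Y}.
Proof. by move=> A B; apply: step_mono. Qed.

Lemma iter_mono f g k : (forall i, (g i <= f i)%N) ->
  iter k (clique_step th f) set0 \subset iter k (clique_step th g) set0.
Proof.
move=> H; elim: k => [|k IH] /=; first exact: subxx.
exact: step_mono.
Qed.

Lemma final_mono f g : (forall i, (g i <= f i)%N) ->
  clique_final th f \subset clique_final th g.
Proof. by move=> H; rewrite /clique_final /fixset; apply: iter_mono. Qed.

Lemma final_down f i j : (f i <= f j)%N -> j \in clique_final th f ->
  i \in clique_final th f.
Proof.
rewrite /clique_final /fixset; elim: #|_| => [|k IH] /=; first by rewrite inE.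
move=> hij; rewrite !inE => /orP[/IH -> //|H]; apply/orP; right.
apply: (lt_le_trans H).
have hn : (0 < w.-1)%N := leq_ltn_trans (leq0n i) (ltn_ord i).
apply: div_anti => //.
- by rewrite leq_add2r.
- by rewrite addn_gt0 hn orbT.
Qed.

Lemma final_fix f g : (forall i, i \notin clique_final th f -> g i = f i) ->
  clique_final th g \subset clique_final th f.
Proof.
move=> H.
have FS : clique_step th g (clique_final th f) \subset clique_final th f.
  apply/subsetP => i; rewrite in_setU in_set => /orP[//|Hi].
  apply: contraT => ni; have gi := H i ni.
  have : i \in clique_step th f (clique_final th f).
    by rewrite in_setU in_set -gi Hi orbT.
  by rewrite {1}/clique_final (fixsetK (@step_homo f)) -/(clique_final th f) (negbTE ni).
rewrite {1}/clique_final {1}/fixset; elim: #|_| => [|k IH] /=; first exact: sub0set.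
apply: subset_trans FS; exact: step_mono.
Qed.
End Clique.
Lemma sort_cat_le (s1 s2 : seq nat) : {in s1 & s2, forall a b, (a <= b)%N} ->
  sort leq (s1 ++ s2) = sort leq s1 ++ sort leq s2.
Proof.
move=> H; apply: (sorted_eq leq_trans anti_leq (sort_sorted leq_total _)).
  rewrite sorted_pairwise ?pairwise_cat; last exact: leq_trans.
  rewrite -!sorted_pairwise; try exact: leq_trans.
  rewrite !sort_sorted ?andbT //; try exact: leq_total.
  by apply/allrelP => a b; rewrite !mem_sort; apply: H.
apply: (perm_trans (permEl (perm_sort _ _))).
by apply: perm_cat; rewrite perm_sym; apply: permEl; apply: perm_sort.
Qed.

Section Key.
Variable R : realFieldType.
Variables (p q : nat -> R) (dbar wbar : nat) (th : R).
Hypothesis Hp0 : forall d, 0 <= p d.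
Hypothesis Hq0 : forall w, 0 <= q w.

Lemma PX_ge0 k : 0 <= PX p q dbar wbar k.
Proof.
have lam0 : 0 <= lam p dbar by apply: sumr_ge0 => d _; rewrite mulr_ge0.
have mu0 : 0 <= mu q wbar by apply: sumr_ge0 => d _; rewrite mulr_ge0.
apply: sumr_ge0 => d _; apply: mulr_ge0.
  by rewrite divr_ge0 // mulr_ge0.
apply: sumr_ge0 => ws _; rewrite divr_ge0 ?exprn_ge0 //.
by apply: prodr_ge0 => j _; rewrite mulr_ge0.
Qed.

Lemma key w xs ys : 0 < pE p q dbar wbar th (size xs) xs w -> size ys = size xs ->
  (forall j, (j < size ys)%N -> (nth 0%N ys j <= nth 0%N xs j)%N /\ 0 < PX p q dbar wbar (nth 0%N ys j)) ->
  0 < pE p q dbar wbar th (size (sort leq ys)) (sort leq ys) w.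
Proof.
move=> Hpos Hsz Hy; rewrite size_sort.
have tge0 : forall (X : {ffun 'I_w.-1 -> 'I_(dbar * wbar).+1}) (b : bool),
    0 <= (\prod_(i < w.-1) PX p q dbar wbar (X i)) * b%:R.
  by move=> X b; rewrite mulr_ge0 // prodr_ge0 // => i _; apply: PX_ge0.
have /psumr_neq0P : pE p q dbar wbar th (size xs) xs w <> 0 by move=> H; rewrite H ltxx in Hpos.
case=> [ | X /andP [_ HX]]; first by move=> X _; apply: tge0.
set b := [&& _ & _] in HX.
have Hb : b by move: HX; case: b => //; rewrite mulr0 ltxx.
rewrite Hb mulr1 in HX.
move: Hb; rewrite /b => /andP [/eqP HcS /eqP Htake].
set f := fun i : 'I_w.-1 => (X i : nat).
set S := clique_final th f in HcS Htake.
set s1 := [seq i <- enum 'I_w.-1 | i \in S].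
set s2 := [seq i <- enum 'I_w.-1 | i \notin S].
have Hperm : perm_eq (enum 'I_w.-1) (s1 ++ s2) by rewrite perm_sym perm_filterC.
have sz1 : size s1 = #|S| by rewrite cardE /s1 enumT /enum_mem.
have down : forall i j, i \in S -> j \notin S -> (f i < f j)%N.
  move=> i j iS jS; rewrite ltnNge; apply/negP => /(@final_down R th w f j i) H.
  by move: jS; rewrite (H iS).
have sortE : forall g : 'I_w.-1 -> nat, (forall i j, i \in S -> j \notin S -> (g i <= g j)%N) ->
    sort leq (map g (enum 'I_w.-1)) = sort leq (map g s1) ++ sort leq (map g s2).
  move=> g Hg; rewrite (perm_sortP leq_total leq_trans anti_leq _ _ (perm_map g Hperm)).
  rewrite map_cat sort_cat_le // => a c /mapP [i + ->] /mapP [j + ->].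
  by rewrite !mem_filter => /andP [iS _] /andP [jS _]; apply: Hg.
have xsE : xs = sort leq (map f s1).
  rewrite -Htake sortE; last by move=> i j iS jS; apply: ltnW; apply: down.
  by rewrite take_size_cat // size_sort size_map sz1 HcS.
set e := sort (relpre f leq) s1.
have xsE' : xs = map f e by rewrite xsE sort_map.
have ue : uniq e by rewrite sort_uniq filter_uniq // enum_uniq.
have sze : size e = size ys by rewrite Hsz xsE' size_map.
have inE' : forall i, (i \in e) = (i \in S) by move=> i; rewrite mem_sort mem_filter mem_enum andbT.
have yle : forall i, i \in S -> (nth 0%N ys (index i e) <= f i)%N.
  move=> i iS; have ie : i \in e by rewrite inE'.
  have ki : (index i e < size ys)%N by rewrite -sze index_mem.
  have [+ _] := Hy _ ki; rewrite xsE' (nth_map i) ?nth_index //.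
  by rewrite sze.
pose G : {ffun 'I_w.-1 -> 'I_(dbar * wbar).+1} :=
  [ffun i => if i \in S then inord (nth 0%N ys (index i e)) else X i].
have gS : forall i, i \in S -> (G i : nat) = nth 0%N ys (index i e).
  move=> i iS; rewrite ffunE iS inordK //; rewrite ltnS.
  apply: leq_trans (yle _ iS) _; rewrite -ltnS; exact: ltn_ord.
have gN : forall i, i \notin S -> (G i : nat) = f i by move=> i iS; rewrite ffunE (negbTE iS).
have Hgf : forall i, (G i <= f i)%N.
  by move=> i; case: (boolP (i \in S)) => iS; [rewrite gS // yle | rewrite gN].
have HS' : clique_final th (fun i => (G i : nat)) = S.
  apply/eqP; rewrite eqEsubset final_fix ?final_mono //.
rewrite /pE (bigD1 G) //=; apply: ltr_wpDr.
  by apply: sumr_ge0 => Y _; apply: tge0.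
have -> : [&& #|clique_final th (fun i => (G i : nat))| == size ys
   & take (size ys) (sort leq [seq (G i : nat) | i <- enum 'I_w.-1]) == sort leq ys].
  rewrite HS' HcS -Hsz eqxx /=; apply/eqP.
  rewrite (sortE (fun i => (G i : nat))); last first.
    move=> i j iS jS /=; rewrite (gN j jS).
    exact: leq_trans (Hgf i) (ltnW (down i j iS jS)).
  rewrite take_size_cat; last by rewrite size_sort size_map sz1 HcS Hsz.
  apply/(perm_sortP leq_total leq_trans anti_leq).
  have mE : map (fun i => (G i : nat)) e = ys.
    apply: (eq_from_nth (x0 := 0%N)); first by rewrite size_map.
    move=> k; rewrite size_map => hk.
    have x0 : 'I_w.-1 by case: (e) hk => [|a r].
    have ek : nth x0 e k \in S by rewrite -inE' mem_nth.
    by rewrite (nth_map x0) // gS // index_uniq.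
  rewrite -mE; apply: perm_map; rewrite perm_sym; apply: permEl; exact: perm_sort.
rewrite mulr1; apply: prodr_gt0 => i _.
case: (boolP (i \in S)) => iS.
  rewrite gS //; apply: (Hy _ _).2; by rewrite -sze index_mem inE'.
rewrite gN //; have := lt0r_neq0 HX => /prodf_neq0/(_ i isT) Hi.
by rewrite lt_def Hi PX_ge0.
Qed.
End Key.

Theorem lemma3 (R : realFieldType) (p q : nat -> R) (dbar wbar : nat) (th : R)
  (Hdbar : (1 <= dbar)%N) (Hwbar : (1 <= wbar)%N)
  (Hp0 : forall d, 0 <= p d) (Hp1 : \sum_(d < dbar.+1) p d = 1)
  (Hpsupp : forall d, (dbar < d)%N -> p d = 0) (Hpz : p 0%N = 0)
  (Hq0 : forall w, 0 <= q w) (Hq1 : \sum_(w < wbar.+1) q w = 1)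
  (Hqsupp : forall w, (wbar < w)%N -> q w = 0) (Hqz : q 0%N = 0) (Hqo : q 1%N = 0)
  (Hth : 0 < th < 1)
  (x : nat) (Hx : (0 < x <= dbar * wbar)%N)
  (s : seq (nat * seq nat)) (Hs : occurs_pos p q dbar wbar th x s)
  (ys : seq (seq nat)) (Hsize : size ys = size s)
  (Hys : forall i, (i < size s)%N ->
     size (nth [::] ys i) = size (nth (0%N, [::]) s i).2 /\
     forall j, (j < size (nth [::] ys i))%N ->
       (nth 0%N (nth [::] ys i) j <= nth 0%N (nth (0%N, [::]) s i).2 j)%N /\
       0 < PX p q dbar wbar (nth 0%N (nth [::] ys i) j)) :
  occurs_pos p q dbar wbar th x
    [seq (cy.1.1, sort leq cy.2) | cy <- zip s ys].
Proof.
case: Hs => [[Hsz_s Hall] [Hp Hsum Hc]].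
set s' := [seq _ | cy <- zip s ys].
have ss' : size s' = size s by rewrite size_map size_zip Hsize minnn.
have mem' : forall c, c \in s' -> exists2 i, (i < size s)%N &
    c = ((nth (0%N, [::]) s i).1, sort leq (nth [::] ys i)).
  move=> c /(nthP (0%N, [::])) [i]; rewrite ss' => hi <-; exists i => //.
  rewrite (nth_map ((0%N, [::]), [::])) ?size_zip ?Hsize ?minnn //.
  by rewrite nth_zip.
have fst' : map fst s' = map fst s.
  transitivity (map fst (unzip1 (zip s ys))); first by rewrite -!map_comp.
  by rewrite unzip1_zip // Hsize.
split; [split|split].
- by rewrite ss'.
- move=> c /mem' [i hi ->] /=.
  have [H1 H2 H3 H4] := Hall _ (mem_nth (0%N, [::]) hi).
  have [Hs1 Hs2] := Hys i hi.
  split => //; first by rewrite size_sort Hs1.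
  + exact: sort_sorted leq_total _.
  apply/allP => y; rewrite mem_sort => /(nthP 0%N) [j hj <-].
  apply: leq_trans (Hs2 j hj).1 _.
  by apply: (allP H4); rewrite mem_nth // -Hs1.
- by rewrite ss'.
- by rewrite -Hsum -(big_map fst xpredT (fun a => a - 1)%N) fst' big_map.
- move=> c /mem' [i hi ->] /=.
  have [Hq Hpe] := Hc _ (mem_nth (0%N, [::]) hi).
  have [Hs1 Hs2] := Hys i hi.
  split => //.
  exact: (@key R p q dbar wbar th Hp0 Hq0 _ _ _ Hpe Hs1 Hs2).
Qed.
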